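(* For $\alpha\in\mathbb{K}^\times$ let $A_{4,\alpha}$ be the evolution algebra over the field $\mathbb{K}$ with natural basis $\{e_1,e_2\}$ such that $e_1^2=\alpha e_2$ and $e_2^2=e_1+e_2$. For $\alpha,\alpha'\in\mathbb{K}^\times$, $A_{4,\alpha}$ is isomorphic to $A_{4,\alpha'}$ as a $\mathbb{K}$-algebra if and only if $\alpha=\alpha'$.
   Context: An evolution algebra over $\mathbb{K}$ is a $\mathbb{K}$-algebra with a basis $\{e_i\}$ (natural basis) such that $e_ie_j=0$ for $i\neq j$. *)

(* Defs.v *)
From HB Require Import structures.
From mathcomp Require Import all_boot all_order all_algebra.
Set Implicit Arguments. Unset Strict Implicit. Unset Printing Implicit Defensive.
Import GRing.Theory.
Local Open Scope ring_scope.

(* An evolution algebra of dimension n over K, presented on K^n = 'rV[K]_n with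
   natural basis the standard basis vectors e_i = delta_mx 0 i, and structure
   matrix C: e_i * e_i = \sum_j C i j e_j (= row i C), e_i * e_j = 0 for i <> j. *)
Definition evo_mul (K : fieldType) (n : nat) (C : 'M[K]_n)
    (x y : 'rV[K]_n) : 'rV[K]_n :=
  \sum_(i < n) (x 0 i * y 0 i) *: row i C.

Definition evo_iso (K : fieldType) (n : nat) (C C' : 'M[K]_n) : Prop :=
  exists f : {linear 'rV[K]_n -> 'rV[K]_n},
    bijective f /\ forall x y, f (evo_mul C x y) = evo_mul C' (f x) (f y).

(* A_{4,alpha}: e_1^2 = alpha e_2, e_2^2 = e_1 + e_2 (indices 0,1 here). *)
Definition A4 (K : fieldType) (alpha : K) : 'M[K]_2 :=
  \matrix_(i < 2, j < 2)
    if i == 0 :> nat then (if j == 0 :> nat then 0 else alpha) else 1.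

(* Main.v *)
Require Import Defs.
From HB Require Import structures.
From mathcomp Require Import all_boot all_order all_algebra.
From mathcomp Require Import ring.
Import GRing.Theory.
Local Open Scope ring_scope.

Lemma evoE (K : fieldType) (al : K) (x y : 'rV[K]_2) (j : 'I_2) :
  (evo_mul (A4 al) x y) 0 j =
  if j == 0 :> nat then x 0 1 * y 0 1 else x 0 0 * y 0 0 * al + x 0 1 * y 0 1.
Proof.
rewrite /evo_mul summxE !big_ord_recl big_ord0 !mxE /=.
case: j => [[|[|]]] //= _.
all: have -> : lift ord0 ord0 = 1 :> 'I_2 by apply: val_inj.
all: have -> : ord0 = 0 :> 'I_2 by apply: val_inj.
all: ring.
Qed.

Lemma evo_eq (K : fieldType) (al : K) (x y z : 'rV[K]_2) :
  evo_mul (A4 al) x y = z <->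
  (x 0 1 * y 0 1 = z 0 0 /\ x 0 0 * y 0 0 * al + x 0 1 * y 0 1 = z 0 1).
Proof.
split.
  by move=> <-; rewrite !evoE.
move=> [h0 h1]; apply/rowP => j; rewrite evoE.
case: j => [[|[|]]] //= jl.
  by rewrite h0; congr (_ _ _); apply: val_inj.
by rewrite h1; congr (_ _ _); apply: val_inj.
Qed.

Theorem lemma3p5 (K : fieldType) (alpha alpha' : K) :
  alpha != 0 -> alpha' != 0 ->
  (evo_iso (A4 alpha) (A4 alpha') <-> alpha = alpha').
Proof.
move=> ha ha'; split; last first.
  move=> <-; exists idfun; split; last by [].
  by exists idfun.
move=> [f [[g fK gK] hf]].
pose e0 : 'rV[K]_2 := delta_mx 0 0.
pose e1 : 'rV[K]_2 := delta_mx 0 1.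
have E01 : evo_mul (A4 alpha) e0 e1 = 0.
  by apply/evo_eq; rewrite !mxE /=; split; ring.
have E00 : evo_mul (A4 alpha) e0 e0 = alpha *: e1.
  by apply/evo_eq; rewrite !mxE /=; split; ring.
have E11 : evo_mul (A4 alpha) e1 e1 = e0 + e1.
  by apply/evo_eq; rewrite !mxE /=; split; ring.
have H1 := hf e0 e1; rewrite E01 linear0 in H1.
have H2 := hf e0 e0; rewrite E00 linearZ in H2.
have H3 := hf e1 e1; rewrite E11 linearD in H3.
move/esym/evo_eq: H1; rewrite !mxE => -[H1a H1b].
move/esym/evo_eq: H2; rewrite !mxE => -[H2a H2b].
move/esym/evo_eq: H3; rewrite !mxE => -[H3a H3b].
set a := f e0 0 0 in H1a H1b H2a H2b H3a H3b.
set b := f e0 0 1 in H1a H1b H2a H2b H3a H3b.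
set c := f e1 0 0 in H1a H1b H2a H2b H3a H3b.
set d := f e1 0 1 in H1a H1b H2a H2b H3a H3b.
have [b0|bn0] := eqVneq b 0.
  rewrite b0 !mul0r !addr0 in H1b H2a H2b H3b.
  have c0 : c = 0.
    by move/esym/eqP: H2a; rewrite mulf_eq0 (negPf ha) => /eqP.
  have dn0 : d != 0.
    apply/eqP => d0.
    have fe1 : f e1 = 0.
      apply/rowP => j; rewrite mxE.
      case: j => [[|[|]]] //= jl.
        by rewrite -c0 /c; congr (_ _ _); apply: val_inj.
      by rewrite -d0 /d; congr (_ _ _); apply: val_inj.
    have : e1 = 0 by apply: (can_inj fK); rewrite fe1 linear0.
    by move/rowP/(_ 1); rewrite !mxE !eqxx /= => /eqP; rewrite oner_eq0.
  rewrite c0 !mul0r add0r in H3b.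
  have d1 : d = 1.
    by apply: (mulIf dn0); rewrite mul1r H3b add0r.
  rewrite c0 addr0 d1 mul1r in H3a.
  rewrite d1 -H3a !mul1r mulr1 in H2b.
  by [].
have d0 : d = 0 by move/eqP: H1a; rewrite mulf_eq0 (negPf bn0) => /eqP.
have cn0 : c != 0.
  apply/eqP => c0; move: H2a; rewrite c0 mulr0 => /eqP; rewrite mulf_eq0 orbb.
  by rewrite (negPf bn0).
rewrite d0 mulr0 addr0 in H1b.
move/eqP: H1b; rewrite !mulf_eq0 (negPf cn0) (negPf ha') !orbF => /eqP a0.
by move: H3a; rewrite d0 a0 mulr0 add0r => /esym/eqP; rewrite (negPf cn0).
Qed.
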